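(* Let $\underline{p}\in\Theta$, $\delta>0$, and $\underline{v}\in\mathbb{R}^S$ with $v_{x_1}\neq v_{x_2}$ for some $x_1,x_2\in S$. Then $C(\underline{p},\underline{v},\delta)=\mu_q^*$, where $(\mu_q^*,\lambda)\in\mathbb{R}^2$ satisfies the system $$\sum_{x\in S}p_x\ln\Big(1+\frac{v_x-\mu_q^*}{\lambda}\Big)=\delta,\qquad \sum_{x\in S}p_x\frac{\lambda}{\lambda+v_x-\mu_q^*}=1,$$ together with $\mu_p<\mu_q^*<V$ and $\lambda<\mu_q^*-V$.
   Context: $S$ is a finite set and $\Theta=\{\underline{q}\in\mathbb{R}^{S}:\sum_{y\in S}q_y=1,\ q_y>0\ \forall y\in S\}$ is the set of strictly positive probability vectors on $S$. The Kullback–Leibler divergence is $\mathbf{I}(\underline{p},\underline{q})=\sum_{x\in S}p_x\ln(p_x/q_x)$. For $\underline{p}\in\Theta$, $\underline{v}\in\mathbb{R}^S$, $\delta\in\mathbb{R}$, define $C(\underline{p},\underline{v},\delta)=\sup_{\underline{q}\in\Theta}\{\sum_{x\in S}q_xv_x:\mathbf{I}(\underline{p},\underline{q})\le\delta\}$. Write $\mu_p=\sum_{x\in S}p_xv_x$ and $V=\max_{x\in S}v_x$. *)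

(* Defs.v *)
From Stdlib Require Import Reals.
Open Scope R_scope.

(* The finite set S is modelled as {0, ..., n-1}; vectors in R^S are
   functions nat -> R, of which only the values at indices < n matter. *)

Fixpoint rsum (n : nat) (f : nat -> R) : R :=
  match n with
  | O => 0
  | S k => rsum k f + f k
  end.

Definition in_Theta (n : nat) (q : nat -> R) : Prop :=
  rsum n q = 1 /\ forall y, (y < n)%nat -> 0 < q y.

Definition KL (n : nat) (p q : nat -> R) : R :=
  rsum n (fun x => p x * ln (p x / q x)).

Definition mean (n : nat) (q v : nat -> R) : R := rsum n (fun x => q x * v x).

Definition C_set (n : nat) (p v : nat -> R) (delta : R) : R -> Prop :=
  fun m => exists q, in_Theta n q /\ KL n p q <= delta /\ m = mean n q v.

Definition is_C (n : nat) (p v : nat -> R) (delta m : R) : Prop :=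
  is_lub (C_set n p v delta) m.

Definition is_max (n : nat) (v : nat -> R) (V : R) : Prop :=
  (forall x, (x < n)%nat -> v x <= V) /\ exists x, (x < n)%nat /\ v x = V.

Definition solves_system (n : nat) (p v : nat -> R) (delta V mu lam : R) : Prop :=
  rsum n (fun x => p x * ln (1 + (v x - mu) / lam)) = delta /\
  rsum n (fun x => p x * (lam / (lam + v x - mu))) = 1 /\
  mean n p v < mu /\ mu < V /\ lam < mu - V.

(* Main.v *)
Require Import Defs.
From Stdlib Require Import Reals Lra Lia.
Open Scope R_scope.

Lemma rsum_ext n f g : (forall x, (x < n)%nat -> f x = g x) -> rsum n f = rsum n g.
Proof. induction n; intros H; simpl; auto. rewrite IHn, H; auto; intros; apply H; lia. Qed.

Lemma rsum_le n f g : (forall x, (x < n)%nat -> f x <= g x) -> rsum n f <= rsum n g.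
Proof. induction n; intros H; simpl; [lra|]. assert (rsum n f <= rsum n g) by (apply IHn; intros; apply H; lia).
 assert (f n <= g n) by (apply H; lia). lra. Qed.

Lemma rsum_plus n f g : rsum n (fun x => f x + g x) = rsum n f + rsum n g.
Proof. induction n; simpl; [lra|]. rewrite IHn; ring. Qed.

Lemma rsum_minus n f g : rsum n (fun x => f x - g x) = rsum n f - rsum n g.
Proof. induction n; simpl; [lra|]. rewrite IHn; ring. Qed.

Lemma rsum_scal n k f : rsum n (fun x => k * f x) = k * rsum n f.
Proof. induction n; simpl; [lra|]. rewrite IHn; ring. Qed.

Lemma rsum_nonneg n f : (forall x, (x < n)%nat -> 0 <= f x) -> 0 <= rsum n f.
Proof. intros H. apply Rle_trans with (rsum n (fun _ => 0)).
 - clear H; induction n; simpl; lra.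
 - apply rsum_le; auto. Qed.

Lemma rsum_ge_term n f k : (forall x, (x < n)%nat -> 0 <= f x) -> (k < n)%nat -> f k <= rsum n f.
Proof. induction n; intros H Hk; [lia|]. simpl.
 destruct (Nat.eq_dec k n) as [->|Hne].
 - assert (0 <= rsum n f) by (apply rsum_nonneg; intros; apply H; lia). lra.
 - assert (f k <= rsum n f) by (apply IHn; [intros; apply H; lia| lia]).
   assert (0 <= f n) by (apply H; lia). lra. Qed.

Lemma rsum_pos n f k : (forall x, (x < n)%nat -> 0 <= f x) -> (k < n)%nat -> 0 < f k -> 0 < rsum n f.
Proof. intros H Hk Hf. pose proof (rsum_ge_term n f k H Hk). lra. Qed.

Lemma rsum_delta n k f : (k < n)%nat ->
  rsum n (fun x => if Nat.eq_dec x k then f x else 0) = f k.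
Proof. induction n; intros Hk; [lia|]. simpl.
 destruct (Nat.eq_dec n k) as [->|Hne].
 - rewrite (rsum_ext k _ (fun _ => 0)). 
   + clear. assert (rsum k (fun _ => 0) = 0) by (induction k; simpl; lra). lra.
   + intros x Hx. destruct (Nat.eq_dec x k); [lia|auto].
 - rewrite IHn; [lra|lia]. Qed.

Lemma rsum_cont n (f : nat -> R -> R) c :
  (forall x, (x < n)%nat -> continuity_pt (f x) c) ->
  continuity_pt (fun t => rsum n (fun x => f x t)) c.
Proof. induction n; intros H; simpl.
 - apply continuity_pt_const. intros a b; reflexivity.
 - change (continuity_pt (plus_fct (fun t => rsum n (fun x => f x t)) (f n)) c).
   apply continuity_pt_plus; [apply IHn; intros; apply H; lia | apply H; lia]. Qed.

Lemma cont_ln f c : continuity_pt f c -> 0 < f c -> continuity_pt (fun t => ln (f t)) c.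
Proof. intros H Hp. change (continuity_pt (comp ln f) c). apply continuity_pt_comp; auto.
 apply derivable_continuous_pt. exists (/ f c). apply derivable_pt_lim_ln; auto. Qed.

Lemma cont_lin b c : continuity_pt (fun t => t - b) c.
Proof. change (continuity_pt (minus_fct id (fct_cte b)) c). apply continuity_pt_minus.
 apply derivable_continuous_pt, derivable_pt_id. apply continuity_pt_const; intros x y; reflexivity. Qed.

Lemma cont_div a b c : c - b <> 0 -> continuity_pt (fun t => a / (t - b)) c.
Proof. intros H. change (continuity_pt (mult_fct (fct_cte a) (inv_fct (fun t => t - b))) c).
 apply continuity_pt_mult. apply continuity_pt_const; intros x y; reflexivity.
 apply continuity_pt_inv; auto. apply cont_lin. Qed.

Lemma ln_le' a b : 0 < a -> a <= b -> ln a <= ln b.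
Proof. intros Ha Hb. destruct (Req_dec a b) as [->|]. lra. left; apply ln_increasing; lra. Qed.

Lemma ln_bound y : 0 < y -> ln y <= y - 1.
Proof. intros H. pose proof (exp_ineq1_le (ln y)). rewrite exp_ln in H0; lra. Qed.

Lemma ln4 a b c d : 0 < a -> 0 < b -> 0 < c -> 0 < d ->
  ln (a * b / (c * d)) = ln a + ln b - ln c - ln d.
Proof. intros. replace (a * b / (c * d)) with ((a * b) * (/ c * / d)) by (field; lra).
 rewrite !ln_mult, !ln_Rinv; try lra; try apply Rmult_lt_0_compat; try apply Rinv_0_lt_compat; lra. Qed.

Lemma ln2 a c : 0 < a -> 0 < c -> ln (a / c) = ln a - ln c.
Proof. intros. unfold Rdiv. rewrite ln_mult, ln_Rinv; try lra. apply Rinv_0_lt_compat; lra. Qed.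

Lemma part2 n p v delta V mu lam : in_Theta n p -> is_max n v V ->
  solves_system n p v delta V mu lam -> is_C n p v delta mu.
Proof.
 intros [Hp1 Hp2] [HV1 _] (E1 & E2 & H3 & H4 & H5).
 assert (Hneg: forall x, (x < n)%nat -> lam + v x - mu < 0) by (intros x Hx; specialize (HV1 x Hx); lra).
 assert (Hlam: lam < 0) by lra.
 assert (Hil: / lam < 0) by (apply Rinv_lt_0_compat; lra).
 assert (Hw: forall x, (x < n)%nat -> 0 < (lam + v x - mu) / lam).
 { intros x Hx. specialize (Hneg x Hx). unfold Rdiv. nra. }
 assert (Hn: (0 < n)%nat) by (destruct n; [simpl in Hp1; lra | lia]).
 assert (Ew: rsum n (fun x => p x * ln ((lam + v x - mu) / lam)) = delta).
 { rewrite <- E1. apply rsum_ext. intros x Hx. f_equal. f_equal. field. lra. }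
 split.
 - intros m (q & [Hq1 Hq2] & HK & ->).
   set (w := fun x => (lam + v x - mu) / lam).
   set (A := rsum n (fun x => q x * w x)).
   assert (HA: 0 < A).
   { apply (rsum_pos _ _ 0); auto. intros x Hx. unfold w. specialize (Hq2 x Hx). specialize (Hw x Hx). nra.
     unfold w. specialize (Hq2 0%nat Hn). specialize (Hw 0%nat Hn). nra. }
   assert (Key: rsum n (fun x => p x * ln (q x * w x / (p x * A))) <= 0).
   { apply Rle_trans with (rsum n (fun x => / A * (q x * w x) - p x)).
     - apply rsum_le. intros x Hx. specialize (Hp2 x Hx). specialize (Hq2 x Hx). specialize (Hw x Hx).
       assert (0 < q x * w x / (p x * A)).
       { unfold w. apply Rdiv_lt_0_compat; apply Rmult_lt_0_compat; auto. }
       pose proof (ln_bound _ H).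
       replace (/ A * (q x * w x) - p x) with (p x * (q x * w x / (p x * A) - 1)) by (field; lra).
       apply Rmult_le_compat_l; lra.
     - rewrite rsum_minus, rsum_scal. fold A. rewrite Hp1. field_simplify; lra. }
   rewrite (rsum_ext _ _ (fun x => ((p x * ln (q x) + p x * ln (w x)) - p x * ln (p x)) - ln A * p x)) in Key.
   2:{ intros x Hx. specialize (Hp2 x Hx). specialize (Hq2 x Hx). specialize (Hw x Hx).
       rewrite ln4; auto. ring. }
   rewrite rsum_minus, rsum_minus, rsum_plus, rsum_scal, Hp1 in Key.
   unfold w in Key. rewrite Ew in Key.
   unfold KL in HK.
   rewrite (rsum_ext _ _ (fun x => p x * ln (p x) - p x * ln (q x))) in HK.
   2:{ intros x Hx. rewrite ln2; auto. ring. }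
   rewrite rsum_minus in HK.
   assert (HA1: 1 <= A).
   { destruct (Rle_lt_dec 1 A); auto. pose proof (ln_increasing A 1 HA r). rewrite ln_1 in H. lra. }
   unfold mean.
   rewrite (rsum_ext _ _ (fun x => (lam * (q x * w x) - lam * q x) + mu * q x)).
   2:{ intros x Hx. unfold w. field. lra. }
   rewrite rsum_plus, rsum_minus, !rsum_scal. fold A. rewrite Hq1. assert (0 <= (A - 1) * (- lam)) by (apply Rmult_le_pos; lra). lra.
 - intros b Hb. apply Hb.
   exists (fun x => p x * (lam / (lam + v x - mu))).
   split; [split|split].
   + exact E2.
   + intros y Hy. specialize (Hp2 y Hy). specialize (Hneg y Hy).
     assert (/(lam + v y - mu) < 0) by (apply Rinv_lt_0_compat; lra). unfold Rdiv. apply Rmult_lt_0_compat; auto. replace (lam * / (lam + v y - mu)) with ((- lam) * (- / (lam + v y - mu))) by ring. apply Rmult_lt_0_compat; lra.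
   + right. unfold KL. rewrite <- Ew. apply rsum_ext. intros x Hx.
     specialize (Hp2 x Hx). specialize (Hneg x Hx). f_equal. f_equal. field. split; lra.
   + unfold mean.
     rewrite (rsum_ext _ _ (fun x => (lam * p x - lam * (p x * (lam / (lam + v x - mu)))) + mu * (p x * (lam / (lam + v x - mu))))).
     2:{ intros x Hx. specialize (Hneg x Hx). field. lra. }
     rewrite rsum_plus, rsum_minus, !rsum_scal, E2, Hp1. ring.
Qed.

Definition Sf n (p v : nat -> R) c := rsum n (fun x => p x / (c - v x)).
Definition Ff n p v c := ln (Sf n p v c) + rsum n (fun x => p x * ln (c - v x)).

Section P1.
Variables (n : nat) (p v : nat -> R) (V : R).
Hypothesis Hp1 : rsum n p = 1.
Hypothesis Hp2 : forall y, (y < n)%nat -> 0 < p y.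
Hypothesis HV1 : forall x, (x < n)%nat -> v x <= V.
Hypothesis Hn : (0 < n)%nat.

Lemma Sf_pos c : V < c -> 0 < Sf n p v c.
Proof. intros Hc. apply (rsum_pos _ _ 0); auto.
 - intros x Hx. specialize (Hp2 x Hx). specialize (HV1 x Hx). left; apply Rdiv_lt_0_compat; lra.
 - specialize (Hp2 0%nat Hn). specialize (HV1 0%nat Hn). apply Rdiv_lt_0_compat; lra. Qed.

Lemma Ff_cont c : V < c -> continuity_pt (Ff n p v) c.
Proof. intros Hc. unfold Ff.
 change (continuity_pt (plus_fct (fun t => ln (Sf n p v t)) (fun t => rsum n (fun x => p x * ln (t - v x)))) c).
 apply continuity_pt_plus.
 - apply cont_ln; [|apply Sf_pos; auto]. unfold Sf.
   apply (rsum_cont n (fun x t => p x / (t - v x))). intros x Hx. apply cont_div.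
   specialize (HV1 x Hx). lra.
 - apply (rsum_cont n (fun x t => p x * ln (t - v x))). intros x Hx.
   change (continuity_pt (mult_fct (fct_cte (p x)) (fun t => ln (t - v x))) c).
   apply continuity_pt_mult. apply continuity_pt_const; intros a b; reflexivity.
   apply cont_ln. apply cont_lin. specialize (HV1 x Hx). lra. Qed.

Lemma Ff_lower x0 x1 c : (x0 < n)%nat -> (x1 < n)%nat -> v x0 = V -> v x1 < V -> V < c ->
  ln (p x0) + p x1 * ln (V - v x1) - p x1 * ln (c - V) <= Ff n p v c.
Proof. intros H0 H1 E0 L1 Hc. unfold Ff.
 assert (A: ln (p x0) - ln (c - V) <= ln (Sf n p v c)).
 { rewrite <- ln2; auto; try lra. apply ln_le'. apply Rdiv_lt_0_compat; auto; lra.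
   unfold Sf. replace (p x0 / (c - V)) with ((fun x => p x / (c - v x)) x0) by (simpl; rewrite E0; auto).
   apply (rsum_ge_term n (fun x => p x / (c - v x))); auto. intros x Hx. specialize (Hp2 x Hx). specialize (HV1 x Hx). left; apply Rdiv_lt_0_compat; lra. }
 assert (B: ln (c - V) + p x1 * (ln (c - v x1) - ln (c - V)) <= rsum n (fun x => p x * ln (c - v x))).
 { rewrite <- (rsum_delta n x1 (fun x => p x * (ln (c - v x) - ln (c - V)))) by auto.
   replace (ln (c - V)) with (ln (c - V) * rsum n p) at 1 by (rewrite Hp1; ring).
   rewrite <- rsum_scal, <- rsum_plus. apply rsum_le. intros x Hx.
   destruct (Nat.eq_dec x x1). lra.
   specialize (Hp2 x Hx). specialize (HV1 x Hx).
   assert (ln (c - V) <= ln (c - v x)) by (apply ln_le'; lra). nra. }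
 assert (C: p x1 * ln (V - v x1) <= p x1 * ln (c - v x1)).
 { apply Rmult_le_compat_l. specialize (Hp2 x1 H1); lra. apply ln_le'; lra. }
 lra. Qed.

Lemma Ff_upper m c : (forall x, (x < n)%nat -> m <= v x) -> V < c ->
  Ff n p v c <= (V - m) / (c - V).
Proof. intros Hm Hc. unfold Ff.
 assert (m <= V) by (specialize (Hm 0%nat Hn); specialize (HV1 0%nat Hn); lra).
 assert (A: ln (Sf n p v c) <= ln (/ (c - V))).
 { apply ln_le'. apply Sf_pos; auto. unfold Sf.
   replace (/ (c - V)) with (rsum n (fun x => / (c - V) * p x)) by (rewrite rsum_scal, Hp1; ring).
   apply rsum_le. intros x Hx. specialize (Hp2 x Hx). specialize (HV1 x Hx).
   unfold Rdiv. rewrite Rmult_comm. apply Rmult_le_compat_r; [lra|]. apply Rinv_le_contravar; lra. }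
 assert (B: rsum n (fun x => p x * ln (c - v x)) <= ln (c - m)).
 { replace (ln (c - m)) with (rsum n (fun x => ln (c - m) * p x)) by (rewrite rsum_scal, Hp1; ring).
   apply rsum_le. intros x Hx. specialize (Hp2 x Hx). specialize (HV1 x Hx). specialize (Hm x Hx).
   rewrite Rmult_comm. apply Rmult_le_compat_r; [lra|]. apply ln_le'; lra. }
 rewrite ln_Rinv in A by lra.
 pose proof (ln_bound ((c - m) / (c - V))). rewrite ln2 in H0 by lra.
 assert ((c - m) / (c - V) - 1 = (V - m) / (c - V)) by (field; lra).
 assert (0 < (c - m) / (c - V)) by (apply Rdiv_lt_0_compat; lra).
 lra. Qed.

End P1.

Lemma Rdiv_le_0_compat a b : 0 <= a -> 0 < b -> 0 <= a / b.
Proof. intros. unfold Rdiv. apply Rmult_le_pos; [|left; apply Rinv_0_lt_compat]; lra. Qed.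

Lemma part1 n p v delta V : in_Theta n p -> 0 < delta ->
  (exists x1 x2, (x1 < n)%nat /\ (x2 < n)%nat /\ v x1 <> v x2) ->
  is_max n v V -> exists mu lam, solves_system n p v delta V mu lam.
Proof.
 intros [Hp1 Hp2] Hd (a1 & a2 & Ha1 & Ha2 & Hne) [HV1 (x0 & Hx0 & E0)].
 assert (Hn: (0 < n)%nat) by lia.
 assert (Hx1: exists x1, (x1 < n)%nat /\ v x1 < V).
 { destruct (Rlt_dec (v a1) V). exists a1; auto. exists a2. split; auto.
   pose proof (HV1 a1 Ha1). pose proof (HV1 a2 Ha2). lra. }
 destruct Hx1 as (x1 & Hx1 & L1).
 set (m := V - rsum n (fun x => V - v x)).
 assert (Hm: forall x, (x < n)%nat -> m <= v x).
 { intros x Hx. unfold m. pose proof (rsum_ge_term n (fun x => V - v x) x).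
   assert (V - v x <= rsum n (fun x => V - v x)). apply H; auto. intros y Hy; specialize (HV1 y Hy); lra. lra. }
 assert (HmV: m <= V) by (specialize (Hm 0%nat Hn); specialize (HV1 0%nat Hn); lra).
 set (K := Rabs (delta - ln (p x0) - p x1 * ln (V - v x1)) + 1).
 assert (HK1: delta - ln (p x0) - p x1 * ln (V - v x1) + 1 <= K) by (unfold K; pose proof (Rle_abs (delta - ln (p x0) - p x1 * ln (V - v x1))); lra).
 assert (HK0: 0 < K) by (unfold K; pose proof (Rabs_pos (delta - ln (p x0) - p x1 * ln (V - v x1))); lra).
 pose proof (Hp2 x1 Hx1) as Hp1pos.
 set (e := exp (- K / p x1)).
 assert (He0: 0 < e) by apply exp_pos.
 assert (He1: e < 1).
 { unfold e. rewrite <- exp_0. apply exp_increasing. unfold Rdiv.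
   assert (0 < / p x1) by (apply Rinv_0_lt_compat; lra). nra. }
 set (t := 2 * (V - m) / delta + 1).
 assert (Ht: 1 <= t) by (unfold t; assert (0 <= 2 * (V - m) / delta) by (apply Rdiv_le_0_compat; lra); lra).
 set (g := fun c => delta - Ff n p v c).
 assert (G1: g (V + e) < 0).
 { unfold g. pose proof (Ff_lower n p v V Hp1 Hp2 HV1 x0 x1 (V + e) Hx0 Hx1 E0 L1 ltac:(lra)).
   replace (V + e - V) with e in H by ring. replace (ln e) with (- K / p x1) in H by (unfold e; rewrite ln_exp; auto).
   replace (p x1 * (- K / p x1)) with (- K) in H by (field; lra). lra. }
 assert (G2: 0 < g (V + t)).
 { unfold g. pose proof (Ff_upper n p v V Hp1 Hp2 HV1 Hn m (V + t) Hm ltac:(lra)).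
   replace (V + t - V) with t in H by ring.
   assert ((V - m) / t < delta).
   { assert (E: delta = (delta * t) * / t) by (field; lra).
     rewrite E. unfold Rdiv. apply Rmult_lt_compat_r. apply Rinv_0_lt_compat; lra.
     unfold t. replace (delta * (2 * (V - m) / delta + 1)) with (2 * (V - m) + delta) by (field; lra). lra. }
   lra. }
 destruct (Ranalysis5.IVT_interv g (V + e) (V + t)) as (c & [Hc1 Hc2] & Hgc).
 { intros a Ha. unfold g. change (continuity_pt (minus_fct (fct_cte delta) (Ff n p v)) a).
   apply continuity_pt_minus. apply continuity_pt_const; intros ? ?; reflexivity.
   apply (Ff_cont n p v V); auto; lra. }
 lra. exact G1. exact G2.
 unfold g in Hgc.
 assert (Hc: V < c) by lra.
 pose proof (Sf_pos n p v V Hp2 HV1 Hn c Hc) as HS.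
 set (S := Sf n p v c) in *.
 assert (Hcv: forall x, (x < n)%nat -> 0 < c - v x) by (intros x Hx; specialize (HV1 x Hx); lra).
 exists (c - / S), (- / S).
 split; [|split; [|split; [|split]]].
 - rewrite (rsum_ext _ _ (fun x => p x * ln (c - v x) + ln S * p x)).
   + rewrite rsum_plus, rsum_scal, Hp1. unfold Ff in Hgc. fold S in Hgc. lra.
   + intros x Hx. specialize (Hcv x Hx).
     replace (1 + (v x - (c - / S)) / - / S) with ((c - v x) * S) by (field; lra).
     rewrite ln_mult; auto. ring.
 - rewrite (rsum_ext _ _ (fun x => / S * (p x / (c - v x)))).
   + rewrite rsum_scal. fold (Sf n p v c). fold S. field. lra.
   + intros x Hx. specialize (Hcv x Hx). replace (- / S + v x - (c - / S)) with (v x - c) by ring. field. lra.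
 - set (a := mean n p v).
   assert (HaV: a <= V).
   { unfold a, mean. replace V with (rsum n (fun x => V * p x)) by (rewrite rsum_scal, Hp1; ring).
     apply rsum_le. intros x Hx. specialize (HV1 x Hx). specialize (Hp2 x Hx). nra. }
   assert (Hx2: exists xs, (xs < n)%nat /\ v xs <> a).
   { destruct (Req_dec (v a1) a). exists a2. split; auto. lra. exists a1; auto. }
   destruct Hx2 as (xs & Hxs & Nxs).
   assert (P: 0 < rsum n (fun x => p x * (v x - a) * (/ (c - v x) - / (c - a)))).
   { assert (T: forall x, (x < n)%nat -> p x * (v x - a) * (/ (c - v x) - / (c - a)) = p x * ((v x - a) * (v x - a)) * (/ (c - v x) * / (c - a))).
     { intros x Hx. specialize (Hcv x Hx). field. split; lra. }
     apply (rsum_pos _ _ xs); auto.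
     - intros x Hx. rewrite T by auto. specialize (Hcv x Hx). specialize (Hp2 x Hx).
       apply Rmult_le_pos. apply Rmult_le_pos. lra. apply Rle_0_sqr.
       left; apply Rmult_lt_0_compat; apply Rinv_0_lt_compat; lra.
     - rewrite T by auto. specialize (Hcv xs Hxs). specialize (Hp2 xs Hxs).
       apply Rmult_lt_0_compat. apply Rmult_lt_0_compat. lra.
       apply Rsqr_pos_lt; lra.
       apply Rmult_lt_0_compat; apply Rinv_0_lt_compat; lra. }
   rewrite (rsum_ext _ _ (fun x => (c - a) * (p x / (c - v x)) - p x - / (c - a) * (p x * v x) + (a / (c - a)) * p x)) in P.
   2:{ intros x Hx. specialize (Hcv x Hx). field. split; lra. }
   rewrite rsum_plus, !rsum_minus, !rsum_scal in P. fold (Sf n p v c) in P. fold S in P.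
   fold (mean n p v) in P. fold a in P. rewrite Hp1 in P.
   replace ((c - a) * S - 1 - / (c - a) * a + a / (c - a) * 1) with ((c - a) * S - 1) in P by (field; lra).
   assert (/ S < c - a).
   { assert (E: / S = / S * 1) by ring. rewrite E.
     replace (c - a) with (/ S * ((c - a) * S)) by (field; lra).
     apply Rmult_lt_compat_l. apply Rinv_0_lt_compat; lra. lra. }
   lra.
 - assert (P: 0 < rsum n (fun x => p x * (V - v x) / (c - v x))).
   { apply (rsum_pos _ _ x1); auto.
     - intros x Hx. specialize (Hcv x Hx). specialize (Hp2 x Hx). specialize (HV1 x Hx).
       apply Rdiv_le_0_compat; nra.
     - specialize (Hcv x1 Hx1). apply Rdiv_lt_0_compat; nra. }
   rewrite (rsum_ext _ _ (fun x => p x - (c - V) * (p x / (c - v x)))) in P.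
   2:{ intros x Hx. specialize (Hcv x Hx). field. lra. }
   rewrite rsum_minus, rsum_scal, Hp1 in P. fold (Sf n p v c) in P. fold S in P.
   assert (c - V < / S).
   { replace (c - V) with (/ S * ((c - V) * S)) by (field; lra).
     assert (E: / S = / S * 1) by ring. rewrite E at 2.
     apply Rmult_lt_compat_l. apply Rinv_0_lt_compat; lra. lra. }
   lra.
 - lra.
Qed.

Theorem theorem2 (n : nat) (p v : nat -> R) (delta V : R) :
  in_Theta n p -> 0 < delta ->
  (exists x1 x2, (x1 < n)%nat /\ (x2 < n)%nat /\ v x1 <> v x2) ->
  is_max n v V ->
  (exists mu lam, solves_system n p v delta V mu lam) /\
  (forall mu lam, solves_system n p v delta V mu lam -> is_C n p v delta mu).
Proof.
  intros Hp Hd Hx HV. split.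
  - apply part1; auto.
  - intros mu lam Hs. apply (part2 n p v delta V mu lam); auto.
Qed.
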